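(* Let $A$ be a discrete $E^0$-algebra and $D\in\mathrm{Div}(\mathbb G)(A)$. Then $\psi^k(D)=\dim(D)[0]$ for all $k\in\mathbb Z_p$ whose $p$-adic valuation $v_p(k)$ is sufficiently large.
   Context: Fix a prime $p$. $E$ is a $p$-local multiplicative cohomology theory with: $E^0$ commutative complete local Noetherian with maximal ideal $\mathfrak m$; $E^{\mathrm{odd}}(\mathrm{pt})=0$; a unit in $E^{-2}$; commutative if $p>2$, quasi-commutative if $p=2$. Then $E^0\mathbb{CP}^\infty=E^0[[x]]$, giving a formal group law $F$ of finite height mod $\mathfrak m$; $\mathbb G=\mathrm{spf}(E^0[[x]])$ over $X=\mathrm{spf}(E^0)$. A discrete $E^0$-algebra is an $E^0$-algebra $A$ with $\mathfrak m^NA=0$ for some $N$. $\mathrm{Div}^+_d(\mathbb G)=\mathbb G^d/\Sigma_d$ is the scheme of effective divisors of degree $d$ (points: monic degree-$d$ polynomials with nilpotent lower coefficients; $[a]$ has equation $t-x(a)$), $\mathrm{Div}^+(\mathbb G)=\coprod_d\mathrm{Div}^+_d(\mathbb G)$ is the free commutative monoid scheme on $\mathbb G$, and $\mathrm{Div}(\mathbb G)=\underline{\mathbb Z}\times\mathrm{colim}_d\mathrm{Div}^+_d(\mathbb G)$ is the free commutative group scheme on $\mathbb G$; it is a $\Lambda$-ring scheme with $(\sum[a_i])(\sum[b_j])=\sum[a_i+b_j]$ on effective divisors, and $\dim\colon\mathrm{Div}(\mathbb G)\to\underline{\mathbb Z}$ is the degree (a locally constant function; over a product ring $A=\prod A_i$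 it is a tuple of integers). For $k\in\mathbb Z_p$, $\psi^k\colon\mathrm{Div}(\mathbb G)\to\mathrm{Div}(\mathbb G)$ is the ring-scheme map induced by multiplication by $k$ on $\mathbb G$, i.e. $\psi^k(\sum_in_i[a_i])=\sum_in_i[ka_i]$, and $\dim(D)[0]$ means $\dim(D)$ times the unit $[0]$. *)

(* Defs.v *)
From Stdlib Require Import ClassicalEpsilon.
From HB Require Import structures.
From mathcomp Require Import all_boot all_order all_algebra.
Set Implicit Arguments. Unset Strict Implicit. Unset Printing Implicit Defensive.
Import Order.TTheory GRing.Theory Num.Theory.
Local Open Scope ring_scope.

Section Ideals.
Variable R : comNzRingType.

Definition is_ideal (I : {pred R}) : Prop :=
  [/\ 0 \in I, (forall x y, x \in I -> y \in I -> x + y \in I)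
    & (forall r x, x \in I -> r * x \in I)].

Definition proper_ideal (I : {pred R}) : Prop := is_ideal I /\ 1 \notin I.

Definition local_with_max (m : {pred R}) : Prop :=
  proper_ideal m /\ forall J : {pred R}, proper_ideal J -> {subset J <= m}.

Definition in_span (s : seq R) (x : R) : Prop :=
  exists r : (size s).-tuple R, x = \sum_(i < size s) r`_i * s`_i.

Definition noetherian : Prop :=
  forall I : {pred R}, is_ideal I ->
    exists s : seq R, forall x, x \in I <-> in_span s x.

Definition in_mpow (m : {pred R}) (n : nat) (x : R) : Prop :=
  exists s : seq (R * n.-tuple R),
    all (fun rt => all (fun y => y \in m) (tval rt.2)) s /\
    x = \sum_(rt <- s) rt.1 * \prod_(y <- tval rt.2) y.

Definition madic_complete (m : {pred R}) : Prop :=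
  (forall u : nat -> R, (forall n, in_mpow m n (u n.+1 - u n)) ->
     exists l, forall n, in_mpow m n (l - u n)) /\
  (forall x, (forall n, in_mpow m n x) -> x = 0).

Definition madic_lim (m : {pred R}) (u : nat -> R) (l : R) : Prop :=
  forall n, exists J, forall j, (J <= j)%N -> in_mpow m n (u j - l).

End Ideals.

Section PowerSeries.
Variable R : comNzRingType.

Definition ps1 := nat -> R.
Definition one1 : ps1 := fun n => (n == 0)%:R.
Definition X1 : ps1 := fun n => (n == 1)%:R.
Definition mul1 (s t : ps1) : ps1 :=
  fun n => \sum_(i < n.+1) s i * t (n - i)%N.
Definition pow1 (s : ps1) (k : nat) : ps1 := iter k (mul1 s) one1.
(* F(g(x), h(x)) for g(0) = h(0) = 0 *)
Definition comp1 (F : nat -> nat -> R) (g h : ps1) : ps1 :=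
  fun n => \sum_(i < n.+1) \sum_(j < n.+1) F i j * mul1 (pow1 g i) (pow1 h j) n.

Definition ps3 := nat -> nat -> nat -> R.
Definition one3 : ps3 := fun a b c => ((a == 0) && (b == 0) && (c == 0))%:R.
Definition X3 : ps3 := fun a b c => ((a == 1) && (b == 0) && (c == 0))%:R.
Definition Y3 : ps3 := fun a b c => ((a == 0) && (b == 1) && (c == 0))%:R.
Definition Z3 : ps3 := fun a b c => ((a == 0) && (b == 0) && (c == 1))%:R.
Definition mul3 (s t : ps3) : ps3 :=
  fun a b c => \sum_(i < a.+1) \sum_(j < b.+1) \sum_(l < c.+1)
                 s i j l * t (a - i)%N (b - j)%N (c - l)%N.
Definition pow3 (s : ps3) (k : nat) : ps3 := iter k (mul3 s) one3.
(* F(g, h) for three-variable series g, h without constant term *)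
Definition comp3 (F : nat -> nat -> R) (g h : ps3) : ps3 :=
  fun a b c => \sum_(i < (a + b + c).+1) \sum_(j < (a + b + c).+1)
                 F i j * mul3 (pow3 g i) (pow3 h j) a b c.

Definition Fxy (F : nat -> nat -> R) : ps3 :=
  fun a b c => if c == 0%N then F a b else 0.
Definition Fyz (F : nat -> nat -> R) : ps3 :=
  fun a b c => if a == 0%N then F b c else 0.

(* F(x,y) = sum_{i,j} F i j x^i y^j is a (commutative, one-dim.) formal group law *)
Definition is_FGL (F : nat -> nat -> R) : Prop :=
  [/\ (forall i, F i 0%N = (i == 1)%:R),
      (forall j, F 0%N j = (j == 1)%:R),
      (forall i j, F i j = F j i)
    & (forall a b c, comp3 F (Fxy F) Z3 a b c = comp3 F X3 (Fyz F) a b c)].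

Definition mulN (F : nat -> nat -> R) (n : nat) : ps1 :=
  iter n (fun g => comp1 F X1 g) (fun _ => 0).

Definition has_height (m : {pred R}) (p : nat) (F : nat -> nat -> R) (h : nat) : Prop :=
  (forall i, (i < p ^ h)%N -> mulN F p i \in m) /\ mulN F p (p ^ h)%N \notin m.

Definition finite_height (m : {pred R}) (p : nat) (F : nat -> nat -> R) : Prop :=
  exists h, has_height m p F h.

End PowerSeries.

Record Zpadic (p : nat) := MkZpadic {
  zp_res : nat -> nat;
  zp_res_lt : forall j, (zp_res j < p ^ j)%N;
  zp_res_compat : forall j, (zp_res j.+1 %% p ^ j)%N = zp_res j }.

Definition vp_ge (p : nat) (k : Zpadic p) (N : nat) : Prop := zp_res k N = 0%N.

Section Mult.
Variables (R : comNzRingType) (m : {pred R}) (F : nat -> nat -> R).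

Definition mulZp (p : nat) (k : Zpadic p) : ps1 R :=
  fun i => epsilon (inhabits 0)
             (fun l => madic_lim m (fun j => mulN F (zp_res k j) i) l).
End Mult.

Section Divisors.
Variables (R : comNzRingType) (A : comAlgType R).

Definition discrete_alg (m : {pred R}) : Prop :=
  exists N, forall r : R, in_mpow m N r -> r *: (1 : A) = 0.

Definition nilpotent_el (a : A) : Prop := exists n, a ^+ n = 0.

(* a nilpotency exponent of a square matrix (junk 0 if not nilpotent) *)
Definition nbound (d : nat) (M : 'M[A]_d) : nat :=
  epsilon (inhabits 0%N) (fun n => M ^+ n = 0).

Definition eval_mx (s : ps1 R) (d : nat) (M : 'M[A]_d) : 'M[A]_d :=
  \sum_(i < nbound M) (s i *: (1 : A)) *: M ^+ i.

(* Div^+_d(A): monic f of degree d with nilpotent lower coefficients *)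
Definition eff_div (f : {poly A}) : Prop :=
  f \is monic /\ forall i, (i < (size f).-1)%N -> nilpotent_el f`_i.

(* locally constant functions Spec A -> Z, as complete families of
   orthogonal idempotents indexed by Z with finite support *)
Definition loc_const_Z (e : int -> A) : Prop :=
  exists s : seq int, [/\ uniq s, (forall n, n \notin s -> e n = 0),
    (forall n, e n * e n = e n), (forall n n', n != n' -> e n * e n' = 0)
    & \sum_(n <- s) e n = 1].

(* A-points of Div(G) = Z x colim_d Div^+_d(G), colimit along f |-> t f *)
Record DivPt := MkDivPt { dv_dim : int -> A; dv_eqn : {poly A} }.

Definition is_DivPt (D : DivPt) : Prop :=
  loc_const_Z (dv_dim D) /\ eff_div (dv_eqn D).

Definition DivPt_eq (D1 D2 : DivPt) : Prop :=
  dv_dim D1 =1 dv_dim D2 /\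
  exists a b : nat, 'X^a * dv_eqn D1 = 'X^b * dv_eqn D2.

(* psi^k on Div^+_d: pushforward along [k]; the equation of [k]_* D is the
   norm N_{A[x]/f / A}(t - [k](x)) = char. poly of multiplication by [k](x)
   on A[x]/(f), computed on the companion matrix of f. *)
Definition psi_eff (m : {pred R}) (F : nat -> nat -> R) (p : nat) (k : Zpadic p)
  (f : {poly A}) : {poly A} :=
  char_poly (eval_mx (mulZp m F k) (companionmx f)).

Definition psiD (m : {pred R}) (F : nat -> nat -> R) (p : nat) (k : Zpadic p)
  (D : DivPt) : DivPt :=
  MkDivPt (dv_dim D) (psi_eff m F k (dv_eqn D)).

(* dim(D)[0] : (dim D, class of the empty effective divisor, equation 1) *)
Definition dim_zero (D : DivPt) : DivPt := MkDivPt (dv_dim D) 1.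

End Divisors.

(* Main.v *)
Require Import Defs.
From HB Require Import structures.
From mathcomp Require Import all_boot all_order all_algebra.
Import Order.TTheory GRing.Theory Num.Theory.
Local Open Scope ring_scope.
From Stdlib Require Import ClassicalEpsilon FunctionalExtensionality.
From mathcomp Require Import zify ring.
Set Implicit Arguments. Unset Strict Implicit. Unset Printing Implicit Defensive.

Section Mpow.
Variables (R : comNzRingType) (m : {pred R}).

Lemma mp0 n : in_mpow m n 0.
Proof. by exists [::]; rewrite big_nil. Qed.

Lemma mpD n x y : in_mpow m n x -> in_mpow m n y -> in_mpow m n (x + y).
Proof.
move=> [s1 [h1 ->]] [s2 [h2 ->]]; exists (s1 ++ s2).
by rewrite all_cat h1 h2 big_cat.
Qed.

Lemma mpMl n r x : in_mpow m n x -> in_mpow m n (r * x).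
Proof.
move=> [s [h ->]]; exists [seq (r * rt.1, rt.2) | rt <- s]; split.
  by rewrite all_map; apply: sub_all h => rt.
rewrite big_map mulr_sumr; apply: eq_bigr => rt _ /=; by rewrite mulrA.
Qed.

Lemma mpMr n r x : in_mpow m n x -> in_mpow m n (x * r).
Proof. by move=> h; rewrite mulrC; apply: mpMl. Qed.

Lemma mpN n x : in_mpow m n x -> in_mpow m n (- x).
Proof. by move=> h; rewrite -mulN1r; apply: mpMl. Qed.

Lemma mpB n x y : in_mpow m n x -> in_mpow m n y -> in_mpow m n (x - y).
Proof. by move=> hx hy; apply: mpD => //; apply: mpN. Qed.

Lemma mp_0 x : in_mpow m 0 x.
Proof.
exists [:: (x, [tuple])]; split; first by [].
by rewrite big_cons big_nil big_nil mulr1 addr0.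
Qed.

Lemma mp1 x : x \in m -> in_mpow m 1 x.
Proof.
move=> hx; exists [:: (1, [tuple x])]; split; first by rewrite /= hx.
by rewrite big_cons big_nil /= big_cons big_nil mulr1 mul1r addr0.
Qed.

Lemma mpS n x : in_mpow m n.+1 x -> in_mpow m n x.
Proof.
move=> [s [h ->]].
exists [seq (rt.1 * thead rt.2, [tuple of behead rt.2]) | rt <- s]; split.
  rewrite all_map; apply: sub_all h => -[r t] /=.
  by case/tupleP: t => y t /= /andP[].
rewrite big_map; apply: eq_bigr => -[r t] _ /=.
case/tupleP: t => y t /=; by rewrite big_cons mulrA.
Qed.

Lemma mp_mono a b x : (b <= a)%N -> in_mpow m a x -> in_mpow m b x.
Proof.
move=> le; rewrite -(subnK le); elim: (a - b)%N => [|k IH] //= h.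
by apply: IH; apply: mpS.
Qed.

Lemma mpM a b x y : in_mpow m a x -> in_mpow m b y -> in_mpow m (a + b) (x * y).
Proof.
move=> [s1 [h1 ->]] [s2 [h2 ->]].
exists [seq (rt.1 * rt'.1, [tuple of tval rt.2 ++ tval rt'.2]) | rt <- s1, rt' <- s2]; split.
  apply/allP => z /allpairsP [[rt rt'] [/= i1 i2 ->]] /=.
  rewrite all_cat; apply/andP; split.
    by move/allP: h1 => /(_ _ i1).
  by move/allP: h2 => /(_ _ i2).
rewrite big_allpairs_dep big_distrlr /=; apply: eq_bigr => rt _; apply: eq_bigr => rt' _.
by rewrite big_cat /= mulrACA.
Qed.

Lemma mpM' a b c x y : (c <= a + b)%N -> in_mpow m a x -> in_mpow m b y -> in_mpow m c (x * y).
Proof. by move=> le ha hb; apply: mp_mono le _; apply: mpM. Qed.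

Lemma mp_sum n I (r : seq I) (P : pred I) (f : I -> R) :
  (forall i, P i -> in_mpow m n (f i)) -> in_mpow m n (\sum_(i <- r | P i) f i).
Proof.
move=> h; apply: (big_ind (in_mpow m n)); [exact: mp0 | exact: mpD | exact: h].
Qed.

End Mpow.

Section Jser.
Variables (R : comNzRingType) (m : {pred R}).

Definition Jser (k : nat) (u : ps1 R) := forall j, in_mpow m (k - j) (u j).

Lemma Jser0 k : Jser k (fun _ => 0).
Proof. by move=> j; apply: mp0. Qed.

Lemma Jser_any u : Jser 0 u.
Proof. by move=> j; apply: mp_0. Qed.

Lemma Jser_mono a b u : (b <= a)%N -> Jser a u -> Jser b u.
Proof. by move=> le h j; apply: mp_mono (h j); lia. Qed.

Lemma JserD k u v : Jser k u -> Jser k v -> Jser k (fun j => u j + v j).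
Proof. by move=> hu hv j; apply: mpD. Qed.

Lemma JserB k u v : Jser k u -> Jser k v -> Jser k (fun j => u j - v j).
Proof. by move=> hu hv j; apply: mpB. Qed.

Lemma JserMl k r u : Jser k u -> Jser k (fun j => r * u j).
Proof. by move=> hu j; apply: mpMl. Qed.

Lemma Jser_mul a b s t : Jser a s -> Jser b t -> Jser (a + b) (mul1 s t).
Proof.
move=> hs ht j; rewrite /mul1; apply: mp_sum => i _.
apply: (mpM' (a := (a - i)%N) (b := (b - (j - i))%N)); last by [].
  have := ltn_ord i; lia.
exact: hs.
Qed.

Lemma Jser_one1 : Jser 0 (one1 R).
Proof. exact: Jser_any. Qed.

Lemma Jser_pow a s i : Jser a s -> Jser (a * i) (pow1 s i).
Proof.
move=> hs; elim: i => [|i IH]; first by rewrite muln0; apply: Jser_any.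
rewrite mulnS; exact: Jser_mul.
Qed.

Lemma JX1 : Jser 1 (X1 R).
Proof.
move=> [|j]; last by rewrite subSS sub0n; apply: mp_0.
by rewrite /X1 /=; apply: mp0.
Qed.

End Jser.

Section PS1.
Variable R : comNzRingType.

Lemma mul1_1l (t : ps1 R) n : mul1 (one1 R) t n = t n.
Proof.
rewrite /mul1 big_ord_recl /= /one1 /= mul1r subn0 big1 ?addr0 // => i _.
by rewrite /bump /= mul0r.
Qed.

Lemma mul1_1r (t : ps1 R) n : mul1 t (one1 R) n = t n.
Proof.
rewrite /mul1 big_ord_recr /= /one1 subnn eqxx mulr1 big1 ?add0r // => i _.
have := ltn_ord i; rewrite /= => lt.
have -> : (n - i == 0)%N = false by apply/negbTE; lia.
by rewrite mulr0.
Qed.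

Lemma pow1_1 (t : ps1 R) n : pow1 t 1 n = t n.
Proof. exact: mul1_1r. Qed.

Lemma mul1_0l (t : ps1 R) n : mul1 (fun _ => 0) t n = 0.
Proof. by rewrite /mul1 big1 // => i _; rewrite mul0r. Qed.

End PS1.

Section FJ.
Variables (R : comNzRingType) (m : {pred R}) (F : nat -> nat -> R).
Hypothesis hF0 : forall i, F i 0%N = (i == 1)%:R.
Hypothesis h0F : forall j, F 0%N j = (j == 1)%:R.

Arguments pow1 : simpl never.
Arguments mul1 : simpl never.
Lemma comp1_0 g w : comp1 F g w 0 = 0.
Proof. by rewrite /comp1 !big_ord1 hF0 mul0r. Qed.

Lemma FJ a b g w : g 0%N = 0 -> w 0%N = 0 -> Jser m a g -> Jser m b w ->
  Jser m (a + b) (fun n => comp1 F g w n - g n - w n).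
Proof.
move=> g0 w0 hg hw [|n].
  by rewrite comp1_0 g0 w0 !subr0; apply: mp0.
rewrite /comp1 big_ord_recl /=.
have -> : \sum_(j < n.+2) F 0%N j * mul1 (pow1 g 0) (pow1 w j) n.+1 = w n.+1.
  rewrite 2!big_ord_recl /= h0F mul0r add0r h0F /= mul1r.
  rewrite big1 ?addr0; first by rewrite mul1_1l pow1_1.
  by move=> i _; rewrite h0F /= mul0r.
under eq_bigr => i _ do rewrite big_ord_recl /= hF0 mul1_1r.
rewrite big_split /= big_ord_recl /= mul1r pow1_1.
rewrite big1 ?addr0; last by move=> i _; rewrite /= mul0r.
have -> : forall x y z : R, y + (x + z) - x - y = z.
  by move=> x y z; ring.
apply: mp_sum => i _; apply: mp_sum => j _; apply: mpMl.
have := Jser_mul (Jser_pow i.+1 hg) (Jser_pow j.+1 hw) n.+1.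
by apply: mp_mono; rewrite /bump /=; nia.
Qed.

End FJ.

Arguments pow1 : simpl never.
Arguments mul1 : simpl never.

Lemma sum_trunc (V : nmodType) (f : nat -> V) k L : (k <= L)%N ->
  (forall i, (k <= i)%N -> f i = 0) -> \sum_(i < L) f i = \sum_(i < k) f i.
Proof.
move=> le h; rewrite -!(big_mkord xpredT) (big_cat_nat (leq0n k) le) /=.
rewrite [X in _ + X]big_nat_cond [X in _ + X]big1 ?addr0 // => i /andP[/andP[hi _] _].
exact: h.
Qed.

Lemma dsum_trunc (V : nmodType) (f : nat -> nat -> V) k L : (k <= L)%N ->
  (forall i j, (k <= i)%N || (k <= j)%N -> f i j = 0) ->
  \sum_(i < L) \sum_(j < L) f i j = \sum_(i < k) \sum_(j < k) f i j.
Proof.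
move=> le h.
rewrite (sum_trunc (f := fun i => \sum_(j < L) f i j) le); last first.
  by move=> i hi; rewrite big1 // => j _; apply: h; rewrite hi.
apply: eq_bigr => i _; apply: (sum_trunc (f := fun j => f i j)) => // j hj; apply: h; by rewrite hj orbT.
Qed.

Section Poly1.
Variables (R : comNzRingType) (F : nat -> nat -> R).

Definition tr K (s : ps1 R) : {poly R} := \poly_(i < K) s i.
Definition eqK K (p q : {poly R}) := forall k, (k < K)%N -> p`_k = q`_k.
Definition ordK K (p : {poly R}) := forall k, (k < K)%N -> p`_k = 0.

Lemma eqK_refl K p : eqK K p p. Proof. by []. Qed.
Lemma eqK_sym K p q : eqK K p q -> eqK K q p.
Proof. by move=> h k hk; rewrite h. Qed.
Lemma eqK_trans K p q r : eqK K p q -> eqK K q r -> eqK K p r.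
Proof. by move=> h1 h2 k hk; rewrite h1 ?h2. Qed.
Lemma eqK_D K p p' q q' : eqK K p p' -> eqK K q q' -> eqK K (p + q) (p' + q').
Proof. by move=> h1 h2 k hk; rewrite !coefD h1 ?h2. Qed.
Lemma eqK_M K p p' q q' : eqK K p p' -> eqK K q q' -> eqK K (p * q) (p' * q').
Proof.
move=> h1 h2 k hk; rewrite !coefM; apply: eq_bigr => j _.
have := ltn_ord j; move=> hj.
by rewrite h1 ?h2 //; lia.
Qed.
Lemma eqK_X K p p' i : eqK K p p' -> eqK K (p ^+ i) (p' ^+ i).
Proof.
move=> h; elim: i => [|i IH]; first by rewrite !expr0.
by rewrite !exprS; apply: eqK_M.
Qed.
Lemma eqK_sum K I (r : seq I) (f g : I -> {poly R}) :
  (forall i, eqK K (f i) (g i)) -> eqK K (\sum_(i <- r) f i) (\sum_(i <- r) g i).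
Proof.
move=> h k hk; rewrite !coef_sum; apply: eq_bigr => i _; exact: h.
Qed.
Lemma eqK_ordK K p q : eqK K p q -> ordK K (p - q).
Proof. by move=> h k hk; rewrite coefB h ?subrr. Qed.
Lemma ordK_eqK K p q : ordK K (p - q) -> eqK K p q.
Proof. by move=> h k hk; apply/eqP; rewrite -subr_eq0 -coefB h. Qed.

Lemma ordK_M a b p q : ordK a p -> ordK b q -> ordK (a + b) (p * q).
Proof.
move=> hp hq k hk; rewrite coefM big1 // => j _.
have := ltn_ord j => hj.
case: (ltnP j a) => ha; first by rewrite hp // mul0r.
by rewrite hq ?mulr0 //; lia.
Qed.
Lemma ordK_Ml K p q : ordK K q -> ordK K (p * q).
Proof.
move=> hq k hk; rewrite coefM big1 // => j _.
have := ltn_ord j => hj; by rewrite hq ?mulr0 //; lia.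
Qed.
Lemma ordK_Mr K p q : ordK K p -> ordK K (p * q).
Proof. by rewrite mulrC; apply: ordK_Ml. Qed.
Lemma ordK_D K p q : ordK K p -> ordK K q -> ordK K (p + q).
Proof. by move=> hp hq k hk; rewrite coefD hp ?hq ?addr0. Qed.
Lemma ordK_0 K : ordK K 0.
Proof. by move=> k _; rewrite coef0. Qed.
Lemma ordK_sum K I (r : seq I) (P : pred I) (f : I -> {poly R}) :
  (forall i, P i -> ordK K (f i)) -> ordK K (\sum_(i <- r | P i) f i).
Proof.
move=> h; apply: (big_ind (ordK K)); [exact: ordK_0 | exact: ordK_D | exact: h].
Qed.
Lemma ordK_mono a b p : (b <= a)%N -> ordK a p -> ordK b p.
Proof. by move=> le h k hk; apply: h; lia. Qed.
Lemma ordK_X p i : ordK 1 p -> ordK i (p ^+ i).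
Proof.
move=> h; elim: i => [|i IH]; first by move=> k.
by rewrite exprS -add1n; apply: ordK_M.
Qed.
Lemma ordK_Xn i : ordK i ('X^i : {poly R}).
Proof. by move=> k hk; rewrite coefXn; case: eqP => // e; move: hk; rewrite e ltnn. Qed.
Lemma ordK_X1 : ordK 1 ('X : {poly R}).
Proof. by move=> [|k] // _; rewrite coefX. Qed.

Lemma tr_coef K s k : (k < K)%N -> (tr K s)`_k = s k.
Proof. by move=> hk; rewrite coef_poly hk. Qed.
Lemma tr_ord1 K s : s 0%N = 0 -> ordK 1 (tr K s).
Proof. by move=> h [|k] // _; rewrite coef_poly; case: ifP. Qed.
Lemma tr_mul1 K s t : eqK K (tr K (mul1 s t)) (tr K s * tr K t).
Proof.
move=> k hk; rewrite tr_coef // coefM /mul1; apply: eq_bigr => j _.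
have := ltn_ord j => hj; rewrite !tr_coef //; lia.
Qed.
Lemma tr_one1 K : eqK K (tr K (one1 R)) 1.
Proof. by move=> k hk; rewrite tr_coef // coef1. Qed.
Lemma tr_pow1 K s i : eqK K (tr K (pow1 s i)) (tr K s ^+ i).
Proof.
elim: i => [|i IH]; first by rewrite expr0; apply: tr_one1.
rewrite exprS; have -> : pow1 s i.+1 = mul1 s (pow1 s i) by []. apply: eqK_trans (tr_mul1 s (pow1 s i)) _; exact: eqK_M.
Qed.

Definition FP L (P Q : {poly R}) : {poly R} :=
  \sum_(i < L) \sum_(j < L) (F i j)%:P * (P ^+ i * Q ^+ j).

Lemma FP_eqK K L P P' Q Q' : eqK K P P' -> eqK K Q Q' -> eqK K (FP L P Q) (FP L P' Q').
Proof.
move=> h1 h2; apply: eqK_sum => i; apply: eqK_sum => j.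
apply: eqK_M => //; apply: eqK_M; exact: eqK_X.
Qed.

Lemma comp1_poly K L g h k : g 0%N = 0 -> h 0%N = 0 -> (k < K)%N -> (k < L)%N ->
  comp1 F g h k = (FP L (tr K g) (tr K h))`_k.
Proof.
move=> g0 h0 hK hL.
have key : forall i j, (tr K g ^+ i * tr K h ^+ j)`_k = mul1 (pow1 g i) (pow1 h j) k.
  move=> i j; rewrite -(@tr_coef K (mul1 (pow1 g i) (pow1 h j)) k hK) (@tr_mul1 K _ _ k hK).
  symmetry; exact: (@eqK_M K _ _ _ _ (@tr_pow1 K g i) (@tr_pow1 K h j) k hK).
have van : forall i j, (k < i + j)%N -> (tr K g ^+ i * tr K h ^+ j)`_k = 0.
  move=> i j hij; exact: (ordK_M (ordK_X (i:=i) (@tr_ord1 K g g0)) (ordK_X (i:=j) (@tr_ord1 K h h0)) hij).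
rewrite /FP coef_sum.
transitivity (\sum_(i < L) \sum_(j < L) F i j * mul1 (pow1 g i) (pow1 h j) k).
  rewrite /comp1; symmetry.
  apply: (dsum_trunc (f := fun i j => F i j * mul1 (pow1 g i) (pow1 h j) k)) => // i j hij.
  by rewrite -key van ?mulr0 //; lia.
apply: eq_bigr => i _; rewrite coef_sum; apply: eq_bigr => j _.
by rewrite coefCM key.
Qed.

End Poly1.

Arguments pow1 : simpl never.
Arguments mul1 : simpl never.
Arguments pow3 : simpl never.
Arguments mul3 : simpl never.

Section Poly3.
Variables (R : comNzRingType) (F : nat -> nat -> R).
Notation P3 := {poly {poly {poly R}}}.

Definition c3 (q : P3) a b c : R := q`_a`_b`_c.
Definition tr3 K (s : ps3 R) : P3 := \poly_(a < K) \poly_(b < K) \poly_(c < K) s a b c.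
Definition eq3K K (q r : P3) := forall a b c, (a < K)%N -> (b < K)%N -> (c < K)%N ->
  c3 q a b c = c3 r a b c.
Definition ord3 k (q : P3) := forall a b c, (a + b + c < k)%N -> c3 q a b c = 0.

Lemma c3_tr3 K s a b c : (a < K)%N -> (b < K)%N -> (c < K)%N -> c3 (tr3 K s) a b c = s a b c.
Proof. by move=> ha hb hc; rewrite /c3 /tr3 coef_poly ha coef_poly hb coef_poly hc. Qed.

Lemma c3M q r a b c : c3 (q * r) a b c = \sum_(i < a.+1) \sum_(j < b.+1) \sum_(l < c.+1)
  c3 q i j l * c3 r (a - i) (b - j) (c - l).
Proof.
rewrite /c3 coefM coef_sum coef_sum; apply: eq_bigr => i _.
rewrite coefM coef_sum; apply: eq_bigr => j _; by rewrite coefM.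
Qed.

Lemma c3_sum I (rr : seq I) (f : I -> P3) a b c :
  c3 (\sum_(i <- rr) f i) a b c = \sum_(i <- rr) c3 (f i) a b c.
Proof. by rewrite /c3 !coef_sum. Qed.

Lemma c3_CM x q a b c : c3 (x%:P%:P%:P * q) a b c = x * c3 q a b c.
Proof. by rewrite /c3 !coefCM. Qed.

Lemma c3B q r a b c : c3 (q - r) a b c = c3 q a b c - c3 r a b c.
Proof. by rewrite /c3 !coefB. Qed.

Lemma c3_1 a b c : c3 1 a b c = ((a == 0%N) && (b == 0%N) && (c == 0%N))%:R.
Proof.
rewrite /c3 coef1; case: (a == 0%N); rewrite ?coef0 //= coef1.
by case: (b == 0%N); rewrite ?coef0 //= coef1.
Qed.

Lemma eq3K_trans K p q r : eq3K K p q -> eq3K K q r -> eq3K K p r.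
Proof. by move=> h1 h2 a b c ha hb hc; rewrite h1 ?h2. Qed.

Lemma eq3K_M K p p' q q' : eq3K K p p' -> eq3K K q q' -> eq3K K (p * q) (p' * q').
Proof.
move=> h1 h2 a b c ha hb hc; rewrite !c3M; apply: eq_bigr => i _.
apply: eq_bigr => j _; apply: eq_bigr => l _.
have := ltn_ord i; have := ltn_ord j; have := ltn_ord l => hl hj hi.
rewrite h1 ?h2 //; lia.
Qed.

Lemma eq3K_X K p p' i : eq3K K p p' -> eq3K K (p ^+ i) (p' ^+ i).
Proof.
move=> h; elim: i => [|i IH]; first by rewrite !expr0.
by rewrite !exprS; apply: eq3K_M.
Qed.

Lemma ord3_M i j q r : ord3 i q -> ord3 j r -> ord3 (i + j) (q * r).
Proof.
move=> hq hr a b c h; rewrite c3M big1 // => i1 _; rewrite big1 // => j1 _.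
rewrite big1 // => l1 _.
have := ltn_ord i1; have := ltn_ord j1; have := ltn_ord l1 => hl hj hi.
case: (ltnP (i1 + j1 + l1) i) => hh; first by rewrite hq ?mul0r.
by rewrite hr ?mulr0 //; lia.
Qed.

Lemma ord3_X q n : ord3 1 q -> ord3 n (q ^+ n).
Proof.
move=> h; elim: n => [|n IH]; first by move=> a b c; rewrite ltn0.
by rewrite exprS -add1n; apply: ord3_M.
Qed.

Lemma tr3_ord1 K s : s 0%N 0%N 0%N = 0 -> ord3 1 (tr3 K s).
Proof.
move=> h0 a b c h.
have ha : a = 0%N by lia. have hb : b = 0%N by lia. have hc : c = 0%N by lia. subst.
by rewrite /c3 /tr3 coef_poly; case: (0 < K)%N; rewrite ?coef0 // coef_poly; case: (0 < K)%N; rewrite ?coef0 // coef_poly; case: (0 < K)%N.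
Qed.

Lemma tr3_mul3 K s t : eq3K K (tr3 K (mul3 s t)) (tr3 K s * tr3 K t).
Proof.
move=> a b c ha hb hc; rewrite c3_tr3 // c3M /mul3; apply: eq_bigr => i _.
apply: eq_bigr => j _; apply: eq_bigr => l _.
have := ltn_ord i; have := ltn_ord j; have := ltn_ord l => hl hj hi.
by rewrite !c3_tr3 //; lia.
Qed.

Lemma tr3_one3 K : eq3K K (tr3 K (one3 R)) 1.
Proof. by move=> a b c ha hb hc; rewrite c3_tr3 // c3_1. Qed.

Lemma tr3_pow3 K s i : eq3K K (tr3 K (pow3 s i)) (tr3 K s ^+ i).
Proof.
elim: i => [|i IH]; first by rewrite expr0; apply: tr3_one3.
rewrite exprS; have -> : pow3 s i.+1 = mul3 s (pow3 s i) by [].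
apply: eq3K_trans (tr3_mul3 s (pow3 s i)) _.
by apply: eq3K_M.
Qed.

Definition FP3 L (Q1 Q2 : P3) : P3 :=
  \sum_(i < L) \sum_(j < L) (F i j)%:P%:P%:P * (Q1 ^+ i * Q2 ^+ j).

Lemma comp3_poly K L u v a b c : u 0%N 0%N 0%N = 0 -> v 0%N 0%N 0%N = 0 ->
  (a < K)%N -> (b < K)%N -> (c < K)%N -> (a + b + c < L)%N ->
  comp3 F u v a b c = c3 (FP3 L (tr3 K u) (tr3 K v)) a b c.
Proof.
move=> u0 v0 ha hb hc hL.
have key : forall i j, c3 (tr3 K u ^+ i * tr3 K v ^+ j) a b c = mul3 (pow3 u i) (pow3 v j) a b c.
  move=> i j; rewrite -(@c3_tr3 K (mul3 (pow3 u i) (pow3 v j)) a b c ha hb hc).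
  rewrite (@tr3_mul3 K _ _ a b c ha hb hc).
  symmetry; exact: (eq3K_M (@tr3_pow3 K u i) (@tr3_pow3 K v j) ha hb hc).
have van : forall i j, (a + b + c < i + j)%N -> c3 (tr3 K u ^+ i * tr3 K v ^+ j) a b c = 0.
  move=> i j hij.
  exact: (ord3_M (ord3_X (n:=i) (@tr3_ord1 K u u0)) (ord3_X (n:=j) (@tr3_ord1 K v v0)) hij).
rewrite /FP3 c3_sum.
transitivity (\sum_(i < L) \sum_(j < L) F i j * mul3 (pow3 u i) (pow3 v j) a b c).
  rewrite /comp3; symmetry.
  apply: (dsum_trunc (f := fun i j => F i j * mul3 (pow3 u i) (pow3 v j) a b c)) => // i j hij.
  by rewrite -key van ?mulr0 //; lia.
apply: eq_bigr => i _; rewrite c3_sum; apply: eq_bigr => j _.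
by rewrite c3_CM key.
Qed.

End Poly3.

Section Ev.
Variables (R : comNzRingType) (F : nat -> nat -> R) (G H : {poly R}).
Hypotheses (G0 : ordK 1 G) (H0 : ordK 1 H).
Notation P3 := {poly {poly {poly R}}}.

Definition e1 : {poly R} -> {poly R} := comp_poly H.
Definition e2 (q : {poly {poly R}}) : {poly R} := (map_poly e1 q).[G].
Fact e2_mm : monoid_morphism e2.
Proof. split; first by rewrite /e2 rmorph1 hornerC. by move=> x y; rewrite /e2 rmorphM /= hornerM. Qed.
Fact e2_add : nmod_morphism e2.
Proof. split; first by rewrite /e2 rmorph0 horner0. by move=> x y; rewrite /e2 rmorphD hornerD. Qed.
HB.instance Definition _ := GRing.isNmodMorphism.Build _ _ e2 e2_add.
HB.instance Definition _ := GRing.isMonoidMorphism.Build _ _ e2 e2_mm.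
Definition ev (q : P3) : {poly R} := (map_poly e2 q).['X].
Fact ev_mm : monoid_morphism ev.
Proof. split; first by rewrite /ev rmorph1 hornerC. by move=> x y; rewrite /ev rmorphM /= hornerM. Qed.
Fact ev_add : nmod_morphism ev.
Proof. split; first by rewrite /ev rmorph0 horner0. by move=> x y; rewrite /ev rmorphD hornerD. Qed.
HB.instance Definition _ := GRing.isNmodMorphism.Build _ _ ev ev_add.
HB.instance Definition _ := GRing.isMonoidMorphism.Build _ _ ev ev_mm.

Lemma e1_wide N (t : {poly R}) : (size t <= N)%N -> e1 t = \sum_(c < N) (t`_c)%:P * H ^+ c.
Proof.
move=> hs; rewrite /e1 /comp_poly (horner_coef_wide (n := N) _ (p := t^:P)) ?size_map_polyC //.
by apply: eq_bigr => c _; rewrite coef_map.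
Qed.

Lemma e2_wide N (r : {poly {poly R}}) : (size r <= N)%N -> e2 r = \sum_(b < N) e1 r`_b * G ^+ b.
Proof.
move=> hs; rewrite /e2 (horner_coef_wide (n := N) _ (p := map_poly e1 r)).
  by apply: eq_bigr => b _; rewrite coef_map.
by apply: leq_trans hs; exact: size_poly.
Qed.

Lemma ev_wide N (q : P3) : (size q <= N)%N -> ev q = \sum_(a < N) e2 q`_a * 'X ^+ a.
Proof.
move=> hs; rewrite /ev (horner_coef_wide (n := N) _ (p := map_poly e2 q)).
  by apply: eq_bigr => a _; rewrite coef_map.
by apply: leq_trans hs; exact: size_poly.
Qed.

Lemma ev_trunc K q : (forall a b c, (a < K)%N -> (b < K)%N -> (c < K)%N -> c3 q a b c = 0) ->
  ordK K (ev q).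
Proof.
move=> h; rewrite (ev_wide (leqnn _)); apply: ordK_sum => a _.
case: (ltnP a K) => ha; last first.
  by apply: ordK_Ml; apply: (ordK_mono ha); exact: ordK_Xn.
apply: ordK_Mr; rewrite (e2_wide (leqnn _)); apply: ordK_sum => b _.
case: (ltnP b K) => hb; last first.
  by apply: ordK_Ml; apply: (ordK_mono hb); exact: ordK_X.
apply: ordK_Mr; rewrite (e1_wide (leqnn _)); apply: ordK_sum => c _.
case: (ltnP c K) => hc; last first.
  by apply: ordK_Ml; apply: (ordK_mono hc); exact: ordK_X.
by have := h a b c ha hb hc; rewrite /c3 => ->; rewrite mul0r; apply: ordK_0.
Qed.

Lemma ev_tr3 K s : ev (tr3 K s) =
  \sum_(a < K) (\sum_(b < K) (\sum_(c < K) (s a b c)%:P * H ^+ c) * G ^+ b) * 'X ^+ a.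
Proof.
rewrite (ev_wide (size_poly _ _)); apply: eq_bigr => a _.
rewrite coef_poly ltn_ord (e2_wide (size_poly _ _)); congr (_ * _); apply: eq_bigr => b _.
rewrite coef_poly ltn_ord (e1_wide (size_poly _ _)); congr (_ * _); apply: eq_bigr => c _.
by rewrite coef_poly ltn_ord.
Qed.

Lemma evB p q : ev (p - q) = ev p - ev q.
Proof. exact: raddfB. Qed.

Lemma ev_const x : ev (x%:P%:P%:P) = x%:P.
Proof.
rewrite (ev_wide (N := 1)) ?size_polyC_leq1 // big_ord1 coefC /= expr0 mulr1.
rewrite (e2_wide (N := 1)) ?size_polyC_leq1 // big_ord1 coefC /= expr0 mulr1.
by rewrite /e1 comp_polyC.
Qed.

Lemma ev_FP3 L Q1 Q2 : ev (FP3 F L Q1 Q2) = FP F L (ev Q1) (ev Q2).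
Proof.
rewrite /FP3 /FP rmorph_sum; apply: eq_bigr => i _; rewrite rmorph_sum.
apply: eq_bigr => j _; by rewrite !rmorphM !rmorphXn /= ev_const.
Qed.

End Ev.

Lemma sum_split (V : nmodType) (f : nat -> V) k L : (k <= L)%N ->
  \sum_(i < L) f i = \sum_(i < k) f i + \sum_(k <= i < L) f i.
Proof.
by move=> le; rewrite -!(big_mkord xpredT) (big_cat_nat (leq0n k) le).
Qed.

Section Ev2.
Variables (R : comNzRingType) (F : nat -> nat -> R) (G H : {poly R}).
Hypotheses (G0 : ordK 1 G) (H0 : ordK 1 H).

Lemma eqK_add0 K (p r : {poly R}) : ordK K r -> eqK K (p + r) p.
Proof. by move=> h k hk; rewrite coefD h ?addr0. Qed.

Lemma dsum_truncK K L (f : nat -> nat -> {poly R}) : (K <= L)%N ->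
  (forall i j, (K <= i)%N || (K <= j)%N -> ordK K (f i j)) ->
  eqK K (\sum_(i < L) \sum_(j < L) f i j) (\sum_(i < K) \sum_(j < K) f i j).
Proof.
move=> le h.
rewrite (@sum_split _ (fun i => \sum_(j < L) f i j) _ _ le).
apply: eqK_trans (eqK_add0 _ _) _.
  rewrite big_nat_cond; apply: ordK_sum => i /andP[/andP[hi _] _].
  by apply: ordK_sum => j _; apply: h; rewrite hi.
apply: eqK_sum => i; rewrite (@sum_split _ (fun j => f i j) _ _ le).
apply: eqK_add0; rewrite big_nat_cond; apply: ordK_sum => j /andP[/andP[hj _] _].
by apply: h; rewrite hj orbT.
Qed.

Lemma ev_delta K a0 b0 c0 (ha : (a0 < K)%N) (hb : (b0 < K)%N) (hc : (c0 < K)%N) (s : ps3 R) :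
  (forall a b c, s a b c = ((a == a0) && (b == b0) && (c == c0))%:R) ->
  ev G H (tr3 K s) = H ^+ c0 * G ^+ b0 * 'X ^+ a0.
Proof.
move=> hs; rewrite ev_tr3 (bigD1 (Ordinal ha)) //= [X in _ + X]big1 ?addr0; last first.
  move=> a ha'; have ha2 : (a == a0 :> nat) = false by exact: negbTE ha'.
  rewrite big1 ?mul0r // => b _; rewrite big1 ?mul0r // => c _.
  by rewrite hs ha2 /= polyC0 mul0r.
rewrite (bigD1 (Ordinal hb)) //= [X in _ + X]big1 ?addr0; last first.
  move=> b hb'; have hb2 : (b == b0 :> nat) = false by exact: negbTE hb'.
  rewrite big1 ?mul0r // => c _.
  by rewrite hs hb2 eqxx /= polyC0 mul0r.
rewrite (bigD1 (Ordinal hc)) //= [X in _ + X]big1 ?addr0; last first.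
  move=> c hc'; have hc2 : (c == c0 :> nat) = false by exact: negbTE hc'.
  by rewrite hs hc2 !eqxx /= polyC0 mul0r.
by rewrite hs !eqxx /= polyC1 mul1r.
Qed.

Lemma ev_Fxy K L : (0 < K)%N -> (K <= L)%N ->
  eqK K (ev G H (tr3 K (Fxy F))) (FP F L 'X G).
Proof.
move=> hK le; apply: eqK_sym; apply: eqK_trans (dsum_truncK (f := fun i j => (F i j)%:P * ('X ^+ i * G ^+ j)) le _) _.
  move=> i j /orP[hi|hj].
    by apply: ordK_Ml; apply: ordK_Mr; apply: (ordK_mono hi); exact: ordK_Xn.
  by apply: ordK_Ml; apply: ordK_Ml; apply: (ordK_mono hj); exact: ordK_X.
rewrite ev_tr3 => k hk; apply: (congr1 (fun p : {poly R} => p`_k)); apply: eq_bigr => a _.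
rewrite mulr_suml; apply: eq_bigr => b _.
rewrite (bigD1 (Ordinal hK)) //= [X in _ + X]big1 ?addr0; last first.
  move=> c hc'; have hc2 : (c == 0 :> nat) = false by exact: negbTE hc'.
  by rewrite /Fxy hc2 polyC0 mul0r.
rewrite /Fxy eqxx expr0 mulr1; ring.
Qed.

Lemma ev_Fyz K L : (0 < K)%N -> (K <= L)%N ->
  eqK K (ev G H (tr3 K (Fyz F))) (FP F L G H).
Proof.
move=> hK le; apply: eqK_sym; apply: eqK_trans (dsum_truncK (f := fun i j => (F i j)%:P * (G ^+ i * H ^+ j)) le _) _.
  move=> i j /orP[hi|hj].
    by apply: ordK_Ml; apply: ordK_Mr; apply: (ordK_mono hi); exact: ordK_X.
  by apply: ordK_Ml; apply: ordK_Ml; apply: (ordK_mono hj); exact: ordK_X.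
rewrite ev_tr3 => k hk; apply: (congr1 (fun p : {poly R} => p`_k)).
rewrite [RHS](bigD1 (Ordinal hK)) //= [X in _ + X]big1 ?addr0; last first.
  move=> a ha'; have ha2 : (a == 0 :> nat) = false by exact: negbTE ha'.
  rewrite big1 ?mul0r // => b _; rewrite big1 ?mul0r // => c _.
  by rewrite /Fyz ha2 polyC0 mul0r.
rewrite expr0 mulr1; apply: eq_bigr => b _; rewrite mulr_suml; apply: eq_bigr => c _.
rewrite /Fyz eqxx; ring.
Qed.

End Ev2.

Lemma assoc1 (R : comNzRingType) (F : nat -> nat -> R) (g h : ps1 R) :
  is_FGL F -> g 0%N = 0 -> h 0%N = 0 ->
  forall n, comp1 F (comp1 F (X1 R) g) h n = comp1 F (X1 R) (comp1 F g h) n.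
Proof.
case=> hF0 h0F _ hA g0 h0 n.
pose K := n.+2; pose L := (3 * K)%N.
have hnK : (n < K)%N by rewrite /K; lia.
have hnL : (n < L)%N by rewrite /L /K; lia.
have hKL : (K <= L)%N by rewrite /L /K; lia.
have hK0 : (0 < K)%N by [].
have hK1 : (1 < K)%N by [].
pose Gp := tr K g; pose Hp := tr K h.
have G1 : ordK 1 Gp := tr_ord1 K g0.
have H1 : ordK 1 Hp := tr_ord1 K h0.
have X0 : X1 R 0%N = 0 by [].
have trX : tr K (X1 R) = 'X.
  apply/polyP => i; rewrite coef_poly coefX /X1.
  by case: ltnP => // hi; have -> : (i == 1)%N = false by apply/negbTE; lia.
have c1 : comp1 F (X1 R) g 0%N = 0 := comp1_0 hF0 _ _.
have c2 : comp1 F g h 0%N = 0 := comp1_0 hF0 _ _.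
rewrite (@comp1_poly _ F K L _ _ _ c1 h0 hnK hnL) (@comp1_poly _ F K L _ _ _ X0 c2 hnK hnL).
have e1 : eqK K (tr K (comp1 F (X1 R) g)) (FP F L 'X Gp).
  by move=> k hk; rewrite tr_coef // (@comp1_poly _ F K L _ _ _ X0 g0 hk) ?trX //; lia.
have e2 : eqK K (tr K (comp1 F g h)) (FP F L Gp Hp).
  by move=> k hk; rewrite tr_coef // (@comp1_poly _ F K L _ _ _ g0 h0 hk) //; lia.
rewrite (FP_eqK F L e1 (eqK_refl Hp) hnK) trX (FP_eqK F L (eqK_refl 'X) e2 hnK).
pose D := FP3 F L (tr3 K (Fxy F)) (tr3 K (Z3 R)) - FP3 F L (tr3 K (X3 R)) (tr3 K (Fyz F)).
have hD : forall a b c, (a < K)%N -> (b < K)%N -> (c < K)%N -> c3 D a b c = 0.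
  move=> a b c ha hb hc; rewrite c3B.
  have hL : (a + b + c < L)%N by rewrite /L; lia.
  rewrite -!(comp3_poly F _ _ ha hb hc hL) ?hA ?subrr //=.
  by rewrite /Fxy /= hF0.
have hZ : ev Gp Hp (tr3 K (Z3 R)) = Hp.
  by rewrite (@ev_delta R Gp Hp K 0 0 1 hK0 hK0 hK1 (Z3 R)) // expr1 !expr0 !mulr1.
have hX : ev Gp Hp (tr3 K (X3 R)) = 'X.
  by rewrite (@ev_delta R Gp Hp K 1 0 0 hK1 hK0 hK0 (X3 R)) // !expr0 expr1 !mul1r.
have := ev_trunc G1 H1 hD.
rewrite /D evB !ev_FP3 hZ hX => hO.
have f1 := FP_eqK F L (ev_Fxy F Hp G1 hK0 hKL) (eqK_refl Hp).
have f2 := FP_eqK F L (eqK_refl 'X) (ev_Fyz F G1 H1 hK0 hKL).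
rewrite -(f1 _ hnK) -(f2 _ hnK).
by apply/eqP; rewrite -subr_eq0 -coefB hO.
Qed.

Section FGL.
Variables (R : comNzRingType) (m : {pred R}) (F : nat -> nat -> R) (p : nat).
Hypothesis hF : is_FGL F.
Hypothesis hsep : forall x, (forall n, in_mpow m n x) -> x = 0.
Hypothesis hp : (p%:R : R) \in m.

Let hF0 : forall i, F i 0%N = (i == 1)%:R. Proof. by case: hF. Qed.
Let h0F : forall j, F 0%N j = (j == 1)%:R. Proof. by case: hF. Qed.

Lemma Jser_ext k (u v : ps1 R) : (forall j, u j = v j) -> Jser m k u -> Jser m k v.
Proof. by move=> e h j; rewrite -e. Qed.

Lemma mulN_z n : mulN F n 0%N = 0.
Proof. by case: n => [|n] //; rewrite /= comp1_0. Qed.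

Lemma comp1_0l (w : ps1 R) : w 0%N = 0 -> comp1 F (fun _ => 0) w = w.
Proof.
move=> w0; apply: functional_extensionality => n.
apply/eqP; rewrite -subr_eq0 -[X in X - _]subr0; apply/eqP; apply: hsep => r.
have := FJ hF0 h0F (erefl _) w0 (Jser0 m (r + n)) (Jser_any m w) n.
by apply: mp_mono; lia.
Qed.

Lemma mulN_add a b : mulN F (a + b) = comp1 F (mulN F a) (mulN F b).
Proof.
elim: a => [|a IH]; first by rewrite add0n comp1_0l // mulN_z.
rewrite addSn /= IH.
apply: functional_extensionality => n.
by rewrite (assoc1 hF (mulN_z a) (mulN_z b)).
Qed.

Lemma mulN_J1 : Jser m 1 (mulN F 1).
Proof.
have h := FJ hF0 h0F (erefl _) (erefl _) (JX1 m) (Jser0 m 0) .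
rewrite addn0 in h.
apply: (Jser_ext _ (JserD (JserD h (JX1 m)) (Jser0 m 1))) => j /=.
by rewrite !addr0 subr0 subrK.
Qed.

Lemma mulN_mul k b : (0 < k)%N -> Jser m k (mulN F b) -> forall c,
  Jser m (k + k) (fun n => mulN F (c * b) n - c%:R * mulN F b n) /\
  Jser m k (mulN F (c * b)).
Proof.
move=> hk hb; elim=> [|c [IH1 IH2]].
  split; last by rewrite mul0n; apply: Jser0.
  by rewrite mul0n; apply: Jser_ext (Jser0 m _) => j; rewrite mul0r subr0.
have hF1 := FJ hF0 h0F (mulN_z b) (mulN_z (c * b)) hb IH2.
rewrite mulSn mulN_add; split.
  apply: (Jser_ext _ (JserD hF1 IH1)) => j /=; rewrite mulrSr; ring.
apply: (Jser_ext _ (JserD (JserD (Jser_mono (leq_addr k k) hF1) hb) IH2)) => j /=.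
ring.
Qed.

Lemma mulN_p k b : (0 < k)%N -> Jser m k (mulN F b) -> Jser m k.+1 (mulN F (p * b)).
Proof.
move=> hk hb; have [h1 _] := mulN_mul hk hb p.
have h2 : Jser m k.+1 (fun n => p%:R * mulN F b n).
  move=> j; apply: (mpM' (a := 1%N) (b := (k - j)%N)); [lia | exact: mp1 | exact: hb].
have hkk : (k.+1 <= k + k)%N by lia.
apply: (Jser_ext _ (JserD (Jser_mono hkk h1) h2)) => j /=.
by rewrite subrK.
Qed.

Lemma mulN_ps s : Jser m s.+1 (mulN F (p ^ s)).
Proof.
elim: s => [|s IH]; first by rewrite expn0; apply: mulN_J1.
by rewrite expnS; apply: mulN_p.
Qed.

Lemma mulN_cong s a c : Jser m s.+1 (fun n => mulN F (a + c * p ^ s) n - mulN F a n).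
Proof.
have [_ hw] := mulN_mul (ltn0Sn s) (mulN_ps s) c.
have h := FJ hF0 h0F (mulN_z a) (mulN_z (c * p ^ s)) (Jser_any m (mulN F a)) hw.
apply: (Jser_ext _ (JserD h hw)) => j /=; rewrite mulN_add; ring.
Qed.

End FGL.

Lemma zp_mod p (k : Zpadic p) j j' : (j <= j')%N -> (zp_res k j' %% p ^ j = zp_res k j)%N.
Proof.
move=> le; rewrite -(subnK le); elim: (j' - j)%N => [|d IH].
  by rewrite add0n modn_small // zp_res_lt.
rewrite addSn -IH -(zp_res_compat k (d + j)) modn_dvdm //.
by apply: dvdn_exp2l; lia.
Qed.

Lemma zp_dec p (k : Zpadic p) j j' : (j <= j')%N ->
  zp_res k j' = (zp_res k j + (zp_res k j' %/ p ^ j) * p ^ j)%N.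
Proof. by move=> le; rewrite {1}(divn_eq (zp_res k j') (p ^ j)) zp_mod // addnC. Qed.

Section Lim.
Variables (R : comNzRingType) (m : {pred R}) (F : nat -> nat -> R) (p : nat).
Hypothesis hF : is_FGL F.
Hypothesis hc : madic_complete m.
Hypothesis hp : (p%:R : R) \in m.

Let hsep : forall x, (forall n, in_mpow m n x) -> x = 0.
Proof. by case: hc. Qed.

Lemma cauchy (k : Zpadic p) i j j' : (j <= j')%N ->
  in_mpow m (j.+1 - i) (mulN F (zp_res k j') i - mulN F (zp_res k j) i).
Proof.
move=> le; rewrite (zp_dec k le); exact: (mulN_cong hF hsep hp).
Qed.

Lemma lim_exists (k : Zpadic p) i :
  exists l, madic_lim m (fun j => mulN F (zp_res k j) i) l.
Proof.
set u := fun j => mulN F (zp_res k j) i.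
have [l hl] : exists l, forall r, in_mpow m r (l - u (r + i)%N).
  case: hc => hcomp _; apply: (hcomp (fun r => u (r + i)%N)) => r.
  apply: mp_mono (cauchy k i (leqnSn (r + i))); lia.
exists l => n; exists (n + i)%N => j hj.
have -> : u j - l = (u j - u (n + i)%N) + - (l - u (n + i)%N) by ring.
apply: mpD; last by apply: mpN.
by apply: mp_mono (cauchy k i hj); lia.
Qed.

Lemma mulZp_small (k : Zpadic p) N i t : zp_res k N = 0%N -> (t <= N.+1 - i)%N ->
  in_mpow m t (mulZp m F k i).
Proof.
move=> h0 ht; rewrite /mulZp.
set u := fun j => mulN F (zp_res k j) i.
have := epsilon_spec (inhabits 0) _ (lim_exists k i).
set l := epsilon _ _ => hl.
have [J hJ] := hl t.
pose j := maxn J N.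
have hu : in_mpow m t (u j).
  have := cauchy k i (leq_maxr J N : (N <= j)%N).
  rewrite h0 /= subr0 => h; apply: mp_mono h; lia.
have -> : l = u j - (u j - l) by ring.
apply: mpB => //; apply: hJ; exact: leq_maxl.
Qed.

End Lim.

Unset Implicit Arguments.
Theorem lemma4p2 (p : nat) (R : comNzRingType) (m : {pred R})
  (F : nat -> nat -> R) (A : comAlgType R) (D : DivPt A) :
  prime p ->
  local_with_max m -> noetherian R -> madic_complete m ->
  (p%:R : R) \in m ->
  is_FGL F -> finite_height m p F ->
  discrete_alg A m ->
  is_DivPt D ->
  exists N : nat, forall k : Zpadic p, vp_ge k N ->
    DivPt_eq (psiD m F k D) (dim_zero D).
Proof.
move=> _ _ _ hc hp hF _ [N0 hN0] _.
pose M := companionmx (dv_eqn D).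
exists (N0 + nbound M)%N => k hk.
split=> //=; exists 0%N, (size (dv_eqn D)).-1.
rewrite mul1r mulr1 /psi_eff.
have -> : eval_mx (mulZp m F k) M = 0.
  rewrite /eval_mx big1 // => i _.
  have hi := ltn_ord i.
  have : in_mpow m N0 (mulZp m F k i).
    apply: (mulZp_small hF hc hp hk); lia.
  by move/hN0 => ->; rewrite scale0r.
by rewrite /char_poly /char_poly_mx map_mx0 subr0 det_scalar.
Qed.
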